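(* Let $w \in \mathfrak{S}_n$ and let $i \in \textsf{supp}(w)$ be unconfined in the reduced words of $w$. Then for every $u \preceq w$ in the Bruhat order, either $i \notin \textsf{supp}(u)$, or $i$ is unconfined in the reduced words of $u$.
   Context: $\sigma_i$ ($1\le i\le n-1$) is the simple transposition swapping $i$ and $i+1$; products are compositions of maps. A reduced word of $w$ is a word $i_1\cdots i_\ell$ of minimal length with $w=\sigma_{i_1}\cdots\sigma_{i_\ell}$. $\textsf{supp}(w)$ is the set of letters appearing in (any) reduced word of $w$. Bruhat order: $u \preceq w$ iff some reduced word of $u$ is a subword of some reduced word of $w$. Given a reduced word $s$ in which the letter $i$ appears exactly once, $i$ is unconfined in $s$ if that occurrence is not between two occurrences of $i+1$ and not between two occurrences of $i-1$ in $s$. If $i$ is unconfined in one reduced word of $w$, it appears exactly once and is unconfined in every reduced word of $w$; this is what ''unconfined in the reduced words of $w$'' means. *)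

(* Defs.v *)
From mathcomp Require Import all_boot all_fingroup.
Set Implicit Arguments. Unset Strict Implicit. Unset Printing Implicit Defensive.

(* Letters are natural numbers 1 <= i <= n-1; positions of S_n are 'I_n,
   with value k (0-based) standing for k+1.  sigma n i swaps i and i+1,
   i.e. the ordinals of value i-1 and i. *)
Definition valid_letter (n i : nat) : bool := (0 < i) && (i < n).

Definition sigma (n i : nat) : {perm 'I_n} :=
  match n as m return {perm 'I_m} with
  | 0 => 1%g
  | m.+1 => if valid_letter m.+1 i then tperm (inord i.-1) (inord i) else 1%g
  end.

Definition valid_word (n : nat) (s : seq nat) : bool := all (valid_letter n) s.

(* Product of a word as composition of maps:
   wordperm [:: i1; ...; il] = sigma i1 \o ... \o sigma il.
   (mathcomp's (p * q) x = q (p x), hence the order below.) *)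
Fixpoint wordperm (n : nat) (s : seq nat) : {perm 'I_n} :=
  match s with
  | [::] => 1%g
  | i :: t => (wordperm n t * sigma n i)%g
  end.

Definition reduced_word (n : nat) (w : {perm 'I_n}) (s : seq nat) : Prop :=
  [/\ valid_word n s, wordperm n s = w &
      forall t, valid_word n t -> wordperm n t = w -> size s <= size t].

Definition in_supp (n : nat) (w : {perm 'I_n}) (i : nat) : Prop :=
  exists s, reduced_word w s /\ i \in s.

Definition bruhat_le (n : nat) (u w : {perm 'I_n}) : Prop :=
  exists s t, [/\ reduced_word u s, reduced_word w t & subseq s t].

Definition between (s : seq nat) (p x : nat) : bool :=
  (x \in take p s) && (x \in drop p.+1 s).

Definition unconfined (s : seq nat) (i : nat) : bool :=
  [&& count_mem i s == 1,
      ~~ between s (index i s) i.+1 &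
      ~~ between s (index i s) i.-1].

Definition unconfined_in (n : nat) (w : {perm 'I_n}) (i : nat) : Prop :=
  forall s, reduced_word w s -> unconfined s i.

(* Main.v *)
Require Import Defs.
From mathcomp Require Import all_boot all_fingroup.
From mathcomp Require Import zify.
Set Implicit Arguments. Unset Strict Implicit. Unset Printing Implicit Defensive.
Arguments sigma : simpl never.

Lemma sum_lt_gen n k : \sum_(q < n) (q < k : nat) = minn k n.
Proof.
elim: n => [|n IH]; first by rewrite big_ord0; lia.
rewrite big_ord_recr /= IH; case: (ltnP n k) => h /=; lia.
Qed.

Lemma term_nat j x y X Y : 0 < j ->
  (x = j.-1 -> y = j -> X < Y) -> (x = j -> y = j.-1 -> Y < X) ->
  (((if x == j.-1 then j else if x == j then j.-1 else x) <
    (if y == j.-1 then j else if y == j then j.-1 else y)) && (Y < X) : nat)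
  = ((x < y) && (Y < X) : nat) + ((x == j) && (y == j.-1)).
Proof.
move=> j0 h1 h2.
case: (eqVneq x j.-1) => e1; case: (eqVneq x j) => e2; case: (eqVneq y j.-1) => e3; case: (eqVneq y j) => e4;
rewrite /=; try lia;
case: (ltnP Y X) => e5; rewrite ?andbT ?andbF //=;
case: ltnP => e6; case: ltnP => e7; rewrite /=; lia.
Qed.

Lemma first_split (i : nat) s : i \in s -> exists a b, s = a ++ i :: b /\ i \notin a.
Proof.
elim: s => // x s IH; rewrite inE; case: (eqVneq i x) => [<-|ne] /= h.
- by exists [::], s.
- have [a [b [-> ia]]] := IH h; exists (x :: a), b; split => //.
  by rewrite inE negb_or ne.
Qed.

Lemma unconf_split a b i : i \notin a ->
  unconfined (a ++ i :: b) i =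
  [&& i \notin b, ~~ ((i.+1 \in a) && (i.+1 \in b)) & ~~ ((i.-1 \in a) && (i.-1 \in b))].
Proof.
move=> ia; rewrite /unconfined /between index_cat (negbTE ia) /= eqxx addn0.
rewrite take_size_cat // drop_cat ltnNge leqnSn /= subSnn /= drop0.
rewrite count_cat /= eqxx.
have -> : count_mem i a = 0 by apply/count_memPn.
congr (_ && _).
rewrite add0n.
change (true + count_mem i b) with (count_mem i b).+1.
rewrite eqSS; case: (boolP (i \in b)) => ib.
- have h : 0 < count_mem i b by rewrite -has_count; apply/hasP; exists i; rewrite ?inE ?eqxx.
  by move: h; case: (count_mem i b).
- by have -> : count_mem i b = 0 by apply/count_memPn.
Qed.

Lemma subseq_split (s a b : seq nat) x : subseq s (a ++ x :: b) -> x \in s ->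
  x \notin a -> x \notin b ->
  exists s1 s2, [/\ s = s1 ++ x :: s2, {subset s1 <= a} & {subset s2 <= b}].
Proof.
case/subseqP => mk Hsz -> xs xa xb.
move: xs; rewrite -(cat_take_drop (size a) mk) mask_cat; last first.
  rewrite size_take Hsz size_cat /=; case: ltnP => //; lia.
case E: (drop (size a) mk) => [|bb m2].
- exfalso; move: (congr1 size E); rewrite size_drop Hsz size_cat /=; lia.
case: bb E => E /=; rewrite ?mem_cat.
- move=> _; exists (mask (take (size a) mk) a), (mask m2 b); split => //.
  + by move=> y /mem_mask.
  + by move=> y /mem_mask.
- case/orP => /mem_mask; by [rewrite (negbTE xa) | rewrite (negbTE xb)].
Qed.

Section S.
Variable m : nat.
Local Notation N := m.+1.
Implicit Types (f g : {perm 'I_N}) (s t : seq nat).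

Definition fv f (k : nat) : nat := f (inord k).

Lemma eq_inord (x : 'I_N) k : k < N -> (x == inord k) = (nat_of_ord x == k).
Proof. by move=> kN; rewrite -(inj_eq val_inj) /= inordK. Qed.

Lemma sigmaE j (x : 'I_N) : valid_letter N j ->
  val (sigma N j x) = if nat_of_ord x == j.-1 then j else if nat_of_ord x == j then j.-1 else nat_of_ord x.
Proof.
move=> vj; rewrite /sigma vj.
case/andP: (vj) => j0 jN.
case: tpermP => [Ex|Ex|n1 n2].
- rewrite Ex /= !inordK; try lia. by rewrite eqxx.
- rewrite Ex /= !inordK; try lia. have -> : (j == j.-1) = false by lia. by rewrite eqxx.
- have n1' : (nat_of_ord x == j.-1) = false by apply/negbTE; rewrite -eq_inord; [apply/eqP|lia].
  have n2' : (nat_of_ord x == j) = false by apply/negbTE; rewrite -eq_inord; [apply/eqP|lia].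
  by rewrite n1' n2'.
Qed.

Lemma sigmaK j : valid_letter N j -> involutive (sigma N j).
Proof. by move=> vj; rewrite /sigma vj; apply: tpermK. Qed.

Lemma sigma_inj j : valid_letter N j -> injective (sigma N j).
Proof. by move=> vj; apply: perm_inj. Qed.

Definition rk f p v : nat := \sum_(q < N) ((q < p) && (f q < v)).

Lemma sum_lt k : \sum_(q < N) (q < k : nat) = minn k N.
Proof. exact: sum_lt_gen. Qed.

Lemma sum_pick k (P : 'I_N -> bool) :
  \sum_(q < N) ((nat_of_ord q == k) && P q : nat) = if k < N then P (inord k) : nat else 0.
Proof.
case: ltnP => kN.
- rewrite (bigD1 (inord k)) //=.
  have -> : (val (inord k : 'I_N) == k) by rewrite /= inordK.
  rewrite big1 ?addn0 // => q /negbTE.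
  by rewrite eq_inord // => ->.
- rewrite big1 // => q _; have -> : (nat_of_ord q == k) = false; last by []. apply/negbTE/eqP => E; move: (ltn_ord q); rewrite E; lia.
Qed.

Lemma rk_le_p f p v : rk f p v <= p.
Proof.
apply: (@leq_trans (\sum_(q < N) (q < p : nat))).
  by apply: leq_sum => q _; case: (q < p); case: (f q < v).
rewrite sum_lt; lia.
Qed.

Lemma rk_le_v f p v : rk f p v <= v.
Proof.
apply: (@leq_trans (\sum_(q < N) (f q < v : nat))).
  by apply: leq_sum => q _; case: (q < p); case: (f q < v).
rewrite (reindex_inj (@perm_inj _ f^-1)) /=.
rewrite (eq_bigr (fun q : 'I_N => (q < v : nat))); last by move=> q _; rewrite permKV.
rewrite sum_lt; lia.
Qed.

Lemma rk1 p v : rk 1 p v = minn (minn p v) N.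
Proof.
rewrite -sum_lt; apply: eq_bigr => q _; rewrite perm1; congr nat_of_bool.
by rewrite leq_min.
Qed.

Lemma rkS f p v : rk f p.+1 v = rk f p v + \sum_(q < N) ((nat_of_ord q == p) && (f q < v)).
Proof.
rewrite /rk -big_split /=; apply: eq_bigr => q _.
rewrite ltnS leq_eqVlt; case: eqP => [->|]; rewrite ?ltnn //=; case: (_ < v); lia.
Qed.

Lemma rkS' f p v : p < N -> rk f p.+1 v = rk f p v + (fv f p < v).
Proof. by move=> pN; rewrite rkS sum_pick pN. Qed.

Lemma rk_mono_p f p p' v : p <= p' -> rk f p v <= rk f p' v.
Proof.
move=> h; apply: leq_sum => q _; case: (f q < v); rewrite ?andbF ?andbT //.
case: (boolP (q < p)) => h'; case: (boolP (q < p')) => h''; rewrite //=; lia.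
Qed.

Lemma rk_mono_v f p v v' : v <= v' -> rk f p v <= rk f p v'.
Proof.
move=> h; apply: leq_sum => q _; case: (q < p); rewrite //=.
case: (boolP (f q < v)) => h'; case: (boolP (f q < v')) => h''; rewrite //=; lia.
Qed.

Lemma rk_add f p d v : rk f (p + d) v <= rk f p v + d.
Proof.
elim: d => [|d IH]; first by rewrite !addn0.
rewrite addnS rkS sum_pick; case: ifP => _; last lia.
case: (_ < v); lia.
Qed.

Lemma LK f p v q : rk f p v = v -> p <= q -> q < N -> v <= fv f q.
Proof.
move=> h pq qN; have h1 := rk_mono_p f v pq.
have h2 := rk_le_v f q.+1 v; rewrite rkS' // in h2.
move: h1 h2; case: ltnP => //; lia.
Qed.

Lemma LK' f p v q : rk f p v = p -> q < p -> q < N -> fv f q < v.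
Proof.
move=> h qp qN; case: ltnP => // hv.
have h1 := rk_add f q.+1 (p - q.+1) v.
have e : (fv f q < v) = false by apply/negbTE; rewrite -leqNgt.
rewrite rkS' // e in h1.
have h2 := rk_le_p f q v.
have e2 : q.+1 + (p - q.+1) = p by lia.
rewrite e2 in h1. lia.
Qed.

Lemma rk_sig_other j f p v : valid_letter N j -> p != j -> rk (sigma N j * f) p v = rk f p v.
Proof.
move=> vj pj; rewrite /rk (reindex_inj (sigma_inj vj)) /=.
apply: eq_bigr => q _; rewrite permM sigmaK //.
congr (nat_of_bool (_ && _)).
rewrite sigmaE //; case/andP: vj => j0 jN; move/eqP: pj => pj.
case: (eqVneq (nat_of_ord q) j.-1) => e1; case: (eqVneq (nat_of_ord q) j) => e2; rewrite /=; try lia;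
apply/idP/idP; lia.
Qed.

Lemma rk_sig_j j f v : valid_letter N j ->
  rk (sigma N j * f) j v + (fv f j.-1 < v) = rk f j v + (fv f j < v).
Proof.
move=> vj; case/andP: (vj) => j0 jN.
have -> : (fv f j.-1 < v : nat) = \sum_(q < N) ((nat_of_ord q == j.-1) && (f q < v)).
  by rewrite sum_pick ifT //; lia.
have -> : (fv f j < v : nat) = \sum_(q < N) ((nat_of_ord q == j) && (f q < v)).
  by rewrite sum_pick jN.
rewrite /rk (reindex_inj (sigma_inj vj)) /= -!big_split /=.
apply: eq_bigr => q _; rewrite permM sigmaK // sigmaE //.
case: (f q < v); rewrite ?andbT ?andbF //.
case: (eqVneq (nat_of_ord q) j.-1) => e1; case: (eqVneq (nat_of_ord q) j) => e2; rewrite /=; try lia;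
case: ltnP; lia.
Qed.

Definition inv f : nat := \sum_(a < N) \sum_(b < N) ((a < b) && (f b < f a)).

Lemma inv1 : inv 1 = 0.
Proof.
rewrite /inv big1 // => a _; rewrite big1 // => b _; rewrite !perm1.
by case: (ltngtP a b).
Qed.

Lemma inv_step j f : valid_letter N j -> fv f j.-1 < fv f j ->
  inv (sigma N j * f) = (inv f).+1.
Proof.
move=> vj asc; case/andP: (vj) => j0 jN.
rewrite /inv (reindex_inj (sigma_inj vj)) /=.
transitivity (\sum_(a < N) \sum_(b < N)
   (((a < b) && (f b < f a) : nat) + ((nat_of_ord a == j) && (nat_of_ord b == j.-1)))).
  apply: eq_bigr => a _; rewrite (reindex_inj (sigma_inj vj)) /=.
  apply: eq_bigr => b _; rewrite !permM !sigmaK // !sigmaE //.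
  apply: term_nat => // ea eb.
  - have -> : a = inord j.-1 by apply: val_inj; rewrite /= inordK //; lia.
    have -> : b = inord j by apply: val_inj; rewrite /= inordK.
    exact: asc.
  - have -> : b = inord j.-1 by apply: val_inj; rewrite /= inordK //; lia.
    have -> : a = inord j by apply: val_inj; rewrite /= inordK.
    exact: asc.
rewrite [LHS](eq_bigr (fun a : 'I_N => \sum_(b < N) ((a < b) && (f b < f a) : nat) + ((nat_of_ord a == j) && true))).
  rewrite big_split /= sum_pick jN /=; lia.
move=> a _; rewrite big_split /=; congr (_ + _).
rewrite (eq_bigr (fun b : 'I_N => ((nat_of_ord b == j.-1) && (nat_of_ord a == j) : nat))); last first.
  by move=> b _; rewrite andbC.
rewrite sum_pick ifT ?andbT //; lia.
Qed.

Lemma sig_inord j : valid_letter N j ->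
  sigma N j (inord j.-1) = inord j /\ sigma N j (inord j) = inord j.-1.
Proof.
move=> vj; case/andP: (vj) => j0 jN; split; apply: val_inj; rewrite sigmaE //= !inordK //; try lia.
- by rewrite eqxx.
have -> : (j == j.-1) = false by lia.
by rewrite eqxx.
Qed.

Lemma fv_sig f j : valid_letter N j ->
  fv (sigma N j * f) j.-1 = fv f j /\ fv (sigma N j * f) j = fv f j.-1.
Proof.
move=> vj; have [e1 e2] := sig_inord vj; rewrite /fv !permM e1 e2; by [].
Qed.

Lemma fv_neq f j : valid_letter N j -> fv f j.-1 != fv f j.
Proof.
move=> vj; case/andP: (vj) => j0 jN; rewrite /fv (inj_eq val_inj) (inj_eq (@perm_inj _ f)).
rewrite eq_inord // inordK; lia.
Qed.

Lemma sigma_invol j f : valid_letter N j -> (sigma N j * (sigma N j * f))%g = f.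
Proof. by move=> vj; apply/permP => x; rewrite !permM sigmaK. Qed.

Lemma inv_desc j f : valid_letter N j -> fv f j < fv f j.-1 ->
  (inv (sigma N j * f)).+1 = inv f.
Proof.
move=> vj h; have [e1 e2] := fv_sig f vj.
have := @inv_step j (sigma N j * f) vj; rewrite e1 e2 sigma_invol // => ->; by [].
Qed.

Definition fin f t := (wordperm N t * f)%g.
Fixpoint asc f t : bool :=
  if t is j :: t' then (fv f j.-1 < fv f j) && asc (sigma N j * f) t' else true.

Lemma fin_nil f : fin f [::] = f.
Proof. by rewrite /fin mul1g. Qed.
Lemma fin_cons f j t : fin f (j :: t) = fin (sigma N j * f) t.
Proof. by rewrite /fin /= mulgA. Qed.
Lemma fin_cat f a b : fin f (a ++ b) = fin (fin f a) b.
Proof. elim: a f => [|j a IH] f; first by rewrite fin_nil. by rewrite cat_cons !fin_cons IH. Qed.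
Lemma asc_cat f a b : asc f (a ++ b) = asc f a && asc (fin f a) b.
Proof. elim: a f => [|j a IH] f /=; first by rewrite fin_nil. by rewrite IH fin_cons andbA. Qed.
Lemma wordperm_fin t : wordperm N t = fin 1 t.
Proof. by rewrite /fin mulg1. Qed.

Lemma rk_asc f t p v : valid_word N t -> asc f t -> rk (fin f t) p v <= rk f p v.
Proof.
elim: t f => [|j t IH] f /=; first by rewrite fin_nil.
case/andP => vj vt /andP[aj at']; rewrite fin_cons.
apply: leq_trans (IH _ vt at') _.
case: (eqVneq p j) => [->|pj]; last by rewrite rk_sig_other.
have := rk_sig_j f v vj.
case: (ltnP (fv f j) v) => h; case: (ltnP (fv f j.-1) v) => h'; rewrite /=; lia.
Qed.

Lemma rk_noletter f t p v : valid_word N t -> p \notin t -> rk (fin f t) p v = rk f p v.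
Proof.
elim: t f => [|j t IH] f /=; first by rewrite fin_nil.
case/andP => vj vt; rewrite inE negb_or => /andP[pj pt]; rewrite fin_cons IH // rk_sig_other //.
Qed.

Lemma inv_le f t : valid_word N t -> inv (fin f t) <= inv f + size t.
Proof.
elim: t f => [|j t IH] f /=; first by rewrite fin_nil addn0.
case/andP => vj vt; rewrite fin_cons; apply: leq_trans (IH _ vt) _.
case: (ltngtP (fv f j.-1) (fv f j)) => h.
- rewrite inv_step //; lia.
- have := inv_desc vj h; lia.
- by move: (fv_neq f vj); rewrite h eqxx.
Qed.

Lemma inv_lt f t : valid_word N t -> ~~ asc f t -> inv (fin f t) < inv f + size t.
Proof.
elim: t f => [|j t IH] f //=.
case/andP => vj vt; rewrite fin_cons negb_and.
case: (ltngtP (fv f j.-1) (fv f j)) => h /=.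
- move=> H; apply: leq_trans (IH _ vt H) _; rewrite inv_step //; lia.
- move=> _; apply: leq_ltn_trans (inv_le _ vt) _; have := inv_desc vj h; lia.
- by move: (fv_neq f vj); rewrite h eqxx.
Qed.

Lemma wordperm_rcons t j : wordperm N (rcons t j) = (sigma N j * wordperm N t)%g.
Proof.
elim: t => [|x t IH] /=; first by rewrite mul1g mulg1.
by rewrite IH mulgA.
Qed.

Lemma nodesc_id f : (forall j, 0 < j < N -> fv f j.-1 < fv f j) -> f = 1%g.
Proof.
move=> H.
have up : forall k, k < N -> k <= fv f k.
  elim=> [|k IH] kN; first by [].
  have := H k.+1; rewrite /= => /(_ (ltac:(lia))). have := IH (ltac:(lia)). lia.
have down : forall d k, k + d = m -> fv f k + d <= m.
  elim=> [|d IH] k e.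
    rewrite addn0; have := ltn_ord (f (inord k)); rewrite /fv; lia.
  have := IH k.+1 (ltac:(lia)). have := H k.+1; rewrite /= => /(_ (ltac:(lia))). lia.
apply/permP => x; apply: val_inj; rewrite perm1 /=.
have := up x (ltn_ord x); have := down (m - x) x (ltac:(have := ltn_ord x; lia)).
rewrite /fv inord_val; lia.
Qed.

Lemma exists_word f : exists t, [/\ valid_word N t, wordperm N t = f & size t <= inv f].
Proof.
move: {2}(inv f) (leqnn (inv f)) => k; elim: k f => [|k IH] f hk.
- exists [::]; split => //=.
  apply/esym/nodesc_id => j hj; case: (ltngtP (fv f j.-1) (fv f j)) => // h.
  + have vj : valid_letter N j by [].
    have := inv_desc vj h; lia.
  + by move: (fv_neq f hj); rewrite h eqxx.
- case: (boolP [exists j : 'I_N, (0 < j) && (fv f j < fv f j.-1)]).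
  + case/existsP => j /andP[j0 h].
    have vj : valid_letter N j by rewrite /valid_letter j0 ltn_ord.
    have e := inv_desc vj h.
    have [t [vt wt st]] := IH (sigma N j * f)%g (ltac:(lia)).
    exists (rcons t j); split.
    * by rewrite /valid_word all_rcons vj.
    * by rewrite wordperm_rcons wt sigma_invol.
    * rewrite size_rcons; lia.
  + rewrite negb_exists => /forallP H.
    exists [::]; split => //=.
    apply/esym/nodesc_id => j hj; case: (ltngtP (fv f j.-1) (fv f j)) => // h.
    * have := H (Ordinal (proj2 (andP hj))); rewrite /= h; case/andP: hj => -> //.
    * by move: (fv_neq f hj); rewrite h eqxx.
Qed.

Lemma reduced_asc (u : {perm 'I_N}) s : reduced_word u s -> asc 1 s.
Proof.
case=> vs ws hmin; have [t [vt wt st]] := exists_word u.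
have := hmin t vt wt; apply/contraLR => nasc.
have := inv_lt vs nasc; rewrite -wordperm_fin ws inv1 add0n -ltnNge => h.
exact: leq_ltn_trans st h.
Qed.

Lemma rk_step j f p v : valid_letter N j -> fv f j.-1 < fv f j ->
  rk (sigma N j * f) p v <= rk f p v.
Proof.
move=> vj aj; case: (eqVneq p j) => [->|pj]; last by rewrite rk_sig_other.
have := rk_sig_j f v vj; lia.
Qed.

Lemma mid g1 s3 j s4 p v : valid_word N (s3 ++ j :: s4) -> asc g1 (s3 ++ j :: s4) ->
  [/\ valid_letter N j, fv (fin g1 s3) j.-1 < fv (fin g1 s3) j,
      rk (fin g1 (s3 ++ j :: s4)) p v <= rk (sigma N j * fin g1 s3) p v,
      rk (sigma N j * fin g1 s3) p v <= rk (fin g1 s3) p v &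
      rk (fin g1 s3) p v <= rk g1 p v].
Proof.
rewrite /valid_word all_cat /= asc_cat /= => /and3P[v3 vj v4] /and3P[a3 aj a4].
split => //.
- by rewrite fin_cat fin_cons; apply: rk_asc.
- by apply: rk_step.
- by apply: rk_asc.
Qed.

Section I.
Variable i : nat.
Hypothesis i0 : 0 < i.
Hypothesis iN : i < N.

Definition condA (u : {perm 'I_N}) := (rk u i i.-1 = i.-1) \/ (rk u i.-1 i = i.-1).
Definition condB (u : {perm 'I_N}) := (rk u i i.+1 = i) \/ (rk u i.+1 i = i).

Lemma vi : valid_letter N i.
Proof. by rewrite /valid_letter i0 iN. Qed.

Lemma step_first f : rk f i i = i -> fv f i.-1 < i /\ i <= fv f i.
Proof.
move=> h; split; first by eapply LK'; [exact: h | lia | lia].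
by eapply LK; [exact: h | done | done].
Qed.

Lemma first_rk f : rk f i i = i -> rk (sigma N i * f) i i = i.-1.
Proof.
move=> h; have [h1 h2] := step_first h; have := rk_sig_j f i vi; lia.
Qed.

Lemma Q1 s1 s2 : valid_word N (s1 ++ i :: s2) -> asc 1 (s1 ++ i :: s2) ->
  unconfined (s1 ++ i :: s2) i -> i \notin s1 ->
  [/\ rk (fin 1 (s1 ++ i :: s2)) i i = i.-1, condA (fin 1 (s1 ++ i :: s2))
    & condB (fin 1 (s1 ++ i :: s2))].
Proof.
move=> vs as' uc is1; rewrite unconf_split // in uc; case/and3P: uc => is2 hB hA.
move: vs as'; rewrite /valid_word all_cat /= asc_cat /= => /and3P[v1 _ v2] /and3P[a1 aj a2].
rewrite fin_cat fin_cons.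
set f1 := fin 1 s1.
have rf1 : forall v, rk f1 i v = minn (minn i v) N by move=> v; rewrite rk_noletter // rk1.
have [x1 y1] : fv f1 i.-1 < i /\ i <= fv f1 i by apply: step_first; rewrite rf1; lia.
have ru : forall v, rk (fin (sigma N i * f1) s2) i v = rk (sigma N i * f1) i v by move=> v; rewrite rk_noletter.
have ES := rk_sig_j f1 _ vi.
split.
- rewrite ru; have := ES i; rewrite rf1; lia.
- case: (boolP (i.-1 \in s1)) => h1.
  + have h2 : i.-1 \notin s2 by apply: contra hA => ->; rewrite h1.
    right; rewrite rk_noletter // rk_sig_other ?vi //; last by apply/eqP; lia.
    have := rkS' f1 i (ltac:(lia) : i.-1 < N); rewrite prednK // rf1; lia.
  + left; rewrite ru; have := ES i.-1; rewrite rf1.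
    have := rkS' f1 i.-1 (ltac:(lia) : i.-1 < N); rewrite prednK // rf1.
    have : rk f1 i.-1 i.-1 = minn (minn i.-1 i.-1) N by rewrite rk_noletter // rk1.
    lia.
- case: (boolP (i.+1 \in s1)) => h1.
  + have h2 : i.+1 \notin s2 by apply: contra hB => ->; rewrite h1.
    right; rewrite rk_noletter // rk_sig_other ?vi //; last by apply/eqP; lia.
    have := rkS' f1 i iN; rewrite rf1; lia.
  + left; rewrite ru; have := ES i.+1; rewrite rf1.
    have := rkS' f1 i.+1 iN; rewrite rf1.
    have : rk f1 i.+1 i.+1 = minn (minn i.+1 i.+1) N by rewrite rk_noletter // rk1.
    lia.
Qed.

Lemma s2_i g1 s2 : valid_word N s2 -> asc g1 s2 -> i \in s2 -> rk g1 i i <= i.-1 ->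
  rk (fin g1 s2) i i = i.-1 -> condA (fin g1 s2) -> condB (fin g1 s2) -> False.
Proof.
move=> vs as' /first_split [s3 [s4 [E _]]]; subst s2.
move=> hg1 hu hA hB.
have M := fun p v => mid p v vs as'.
have [_ ag u1 u2 u3] := M i i.
have ES := rk_sig_j (fin g1 s3) i vi.
have FA : (i.-1 <= fv (fin g1 s3) i /\
           rk (sigma N i * fin g1 s3) i i.-1 + (fv (fin g1 s3) i.-1 < i.-1)
             = rk (fin g1 s3) i i.-1 + (fv (fin g1 s3) i < i.-1) /\
           rk (fin g1 s3) i i.-1 = i.-1 /\ rk (sigma N i * fin g1 s3) i i.-1 = i.-1)
       \/ (rk (fin g1 s3) i i = rk (fin g1 s3) i.-1 i + (fv (fin g1 s3) i.-1 < i) /\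
           rk (fin g1 s3) i.-1 i = i.-1).
  case: hA => hA.
  - have [_ _ w1 w2 w3] := M i i.-1.
    have r1 := rk_le_v (fin g1 s3) i i.-1.
    have r2 := rk_le_v (sigma N i * fin g1 s3) i i.-1.
    have e1 : rk (fin g1 s3) i i.-1 = i.-1 by lia.
    left; split; last split; [ | exact: (rk_sig_j _ _ vi) | lia].
    by eapply LK; [exact: e1 | done | done].
  - have [_ _ w1 w2 w3] := M i.-1 i.
    have r1 := rk_le_p (fin g1 s3) i.-1 i.
    have e1 : rk (fin g1 s3) i.-1 i = i.-1 by lia.
    right; split => //; have := rkS' (fin g1 s3) i (ltac:(lia) : i.-1 < N); rewrite prednK //; lia.
have FB : (fv (fin g1 s3) i.-1 < i.+1 /\
           rk (sigma N i * fin g1 s3) i i.+1 + (fv (fin g1 s3) i.-1 < i.+1)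
             = rk (fin g1 s3) i i.+1 + (fv (fin g1 s3) i < i.+1) /\
           rk (fin g1 s3) i i.+1 = i /\ rk (sigma N i * fin g1 s3) i i.+1 = i)
       \/ (rk (fin g1 s3) i.+1 i = rk (fin g1 s3) i i + (fv (fin g1 s3) i < i) /\
           rk (fin g1 s3) i.+1 i = i).
  case: hB => hB.
  - have [_ _ w1 w2 w3] := M i i.+1.
    have r1 := rk_le_p (fin g1 s3) i i.+1.
    have r2 := rk_le_p (sigma N i * fin g1 s3) i i.+1.
    have e1 : rk (fin g1 s3) i i.+1 = i by lia.
    left; split; last split; [ | exact: (rk_sig_j _ _ vi) | lia].
    by eapply LK'; [exact: e1 | lia | lia].
  - have [_ _ w1 w2 w3] := M i.+1 i.
    have r1 := rk_le_v (fin g1 s3) i.+1 i.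
    have e1 : rk (fin g1 s3) i.+1 i = i by lia.
    right; split => //; exact: rkS'.
lia.
Qed.

Lemma s2_ip1 g1 s2 : valid_word N s2 -> asc g1 s2 -> i.+1 \in s2 -> rk g1 i i <= i.-1 ->
  rk (fin g1 s2) i i = i.-1 -> rk (fin g1 s2) i.+1 i = i -> False.
Proof.
move=> vs as' /first_split [s3 [s4 [E _]]]; subst s2.
move=> hg1 hu hB.
have M := fun p v => mid p v vs as'.
have [vj ag u1 u2 u3] := M i.+1 i.
have [_ _ w1 w2 w3] := M i i.
have r1 := rk_le_v (fin g1 s3) i.+1 i.
have e1 : rk (fin g1 s3) i.+1 i = i by lia.
have := rkS' (fin g1 s3) i iN.
have : i <= fv (fin g1 s3) i.+1 by eapply LK; [exact: e1 | done | case/andP: vj].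
have := rk_sig_j (fin g1 s3) i vj.
rewrite /=; lia.
Qed.

Lemma s2_im1 g1 s2 : valid_word N s2 -> asc g1 s2 -> i.-1 \in s2 -> rk g1 i i <= i.-1 ->
  rk (fin g1 s2) i i = i.-1 -> rk (fin g1 s2) i.-1 i = i.-1 -> False.
Proof.
move=> vs as' /first_split [s3 [s4 [E _]]]; subst s2.
move=> hg1 hu hA.
have M := fun p v => mid p v vs as'.
have [vj ag u1 u2 u3] := M i.-1 i.
have [_ _ w1 w2 w3] := M i i.
have i1 : 0 < i.-1 by case/andP: vj.
have r1 := rk_le_p (fin g1 s3) i.-1 i.
have e1 : rk (fin g1 s3) i.-1 i = i.-1 by lia.
have := rkS' (fin g1 s3) i (ltac:(lia) : i.-1 < N); rewrite prednK //.
have : fv (fin g1 s3) i.-1.-1 < i by eapply LK'; [exact: e1 | lia | lia].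
have := rk_sig_j (fin g1 s3) i vj.
lia.
Qed.

Lemma s1_ip1 s1 : valid_word N s1 -> asc 1 s1 -> i \notin s1 ->
  rk (sigma N i * fin 1 s1) i i.+1 = i -> i.+1 \notin s1.
Proof.
move=> vs as' is1 hB; apply/negP => /first_split [s3 [s4 [E n3]]].
have rf1 : forall v, rk (fin 1 s1) i v = minn (minn i v) N by move=> v; rewrite rk_noletter // rk1.
have [x1 y1] : fv (fin 1 s1) i.-1 < i /\ i <= fv (fin 1 s1) i by apply: step_first; rewrite rf1; lia.
have ES1 := rk_sig_j (fin 1 s1) i.+1 vi.
have R1 := rkS' (fin 1 s1) i.+1 iN.
have := rf1 i.+1.
subst s1.
have [vj ag u1 u2 u3] := mid i.+1 i.+1 vs as'.
have i3 : i \notin s3 by apply: contra is1; rewrite mem_cat => ->.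
have e0 : rk (fin 1 s3) i.+1 i.+1 = i.+1.
  rewrite rk_noletter //; last by move: vs; rewrite /valid_word all_cat => /andP[].
  rewrite rk1; case/andP: vj; lia.
have : fv (fin 1 s3) i < i.+1 by eapply LK'; [exact: e0 | lia | case/andP: vj].
have : i.+1 <= fv (fin 1 s3) i.+1 by eapply LK; [exact: e0 | done | case/andP: vj].
have := rk_sig_j (fin 1 s3) i.+1 vj.
rewrite /=; lia.
Qed.

Lemma s1_im1 s1 : valid_word N s1 -> asc 1 s1 -> i \notin s1 ->
  rk (sigma N i * fin 1 s1) i i.-1 = i.-1 -> i.-1 \notin s1.
Proof.
move=> vs as' is1 hA; apply/negP => /first_split [s3 [s4 [E n3]]].
have rf1 : forall v, rk (fin 1 s1) i v = minn (minn i v) N by move=> v; rewrite rk_noletter // rk1.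
have [x1 y1] : fv (fin 1 s1) i.-1 < i /\ i <= fv (fin 1 s1) i by apply: step_first; rewrite rf1; lia.
have ES1 := rk_sig_j (fin 1 s1) i.-1 vi.
have R1 := rkS' (fin 1 s1) i.-1 (ltac:(lia) : i.-1 < N); rewrite prednK // in R1.
have := rf1 i.-1.
subst s1.
have [vj ag u1 u2 u3] := mid i.-1 i.-1 vs as'.
have i2 : 0 < i.-1 by case/andP: vj.
have i3 : i \notin s3 by apply: contra is1; rewrite mem_cat => ->.
have e0 : rk (fin 1 s3) i.-1 i.-1 = i.-1.
  rewrite rk_noletter //; last by move: vs; rewrite /valid_word all_cat => /andP[].
  rewrite rk1; lia.
have : fv (fin 1 s3) i.-1.-1 < i.-1 by eapply LK'; [exact: e0 | lia | lia].
have : i.-1 <= fv (fin 1 s3) i.-1 by eapply LK; [exact: e0 | done | lia].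
have := rk_sig_j (fin 1 s3) i.-1 vj.
lia.
Qed.

Lemma Q2 s : valid_word N s -> asc 1 s -> rk (fin 1 s) i i = i.-1 ->
  condA (fin 1 s) -> condB (fin 1 s) -> unconfined s i.
Proof.
move=> vs as' h0 hA hB.
have iS : i \in s.
  apply/negPn/negP => ni; move: h0; rewrite rk_noletter // rk1; lia.
have [s1 [s2 [E is1]]] := first_split iS; subst s.
rewrite unconf_split //.
move: vs as' h0 hA hB; rewrite /valid_word all_cat /= asc_cat /= fin_cat fin_cons.
move=> /and3P[v1 _ v2] /and3P[a1 aj a2] h0 hA hB.
have rf1 : rk (fin 1 s1) i i = i by rewrite rk_noletter // rk1; lia.
have g1i := first_rk rf1.
have bnd := fun p v => rk_asc p v v2 a2.
apply/and3P; split.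
- apply/negP => is2; apply: (s2_i v2 a2 is2 _ h0 hA hB); lia.
- apply/negP => /andP[h1 h2]; case: hB => hB.
  + have := bnd i i.+1; have := rk_le_p (sigma N i * fin 1 s1) i i.+1 => r1 r2.
    have := s1_ip1 v1 a1 is1 (ltac:(lia)); by rewrite h1.
  + apply: (s2_ip1 v2 a2 h2 _ h0 hB); lia.
- apply/negP => /andP[h1 h2]; case: hA => hA.
  + have := bnd i i.-1; have := rk_le_v (sigma N i * fin 1 s1) i i.-1 => r1 r2.
    have := s1_im1 v1 a1 is1 (ltac:(lia)); by rewrite h1.
  + apply: (s2_im1 v2 a2 h2 _ h0 hA); lia.
Qed.

End I.
End S.

Unset Implicit Arguments.

Theorem lemma2p10 (n : nat) (w : {perm 'I_n}) (i : nat) :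
  in_supp w i -> unconfined_in w i ->
  forall u : {perm 'I_n}, bruhat_le u w ->
    ~ in_supp u i \/ unconfined_in u i.
Proof.
case: n w => [|m] w.
  move=> [s [[vs _ _] is0]] _ u _; exfalso; move/allP: vs => /(_ _ is0); rewrite /valid_letter => H; clear -H; lia.
move=> _ hunc u [s [t [rs rt st]]].
have uct := hunc t rt.
have vt : valid_word m.+1 t by case: rt.
have it : i \in t.
  move: uct; rewrite /unconfined => /and3P[/eqP c _ _]; rewrite -has_pred1 has_count c //.
have vi : valid_letter m.+1 i := allP vt i it.
have [i0 iN] : 0 < i /\ i < m.+1 by case/andP: vi.
have [t1 [t2 [Et it1]]] := first_split it.
move: uct; rewrite Et unconf_split // => /and3P[it2 hB hA].
move: st; rewrite Et => st.
have one_fin : forall s0 : seq nat, wordperm m.+1 s0 = fin (1%g : {perm 'I_m.+1}) s0.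
  by move=> s0; apply: wordperm_fin.
case: (boolP (i \in s)) => iS.
- right.
  have [s1 [s2 [Es sub1 sub2]]] := subseq_split st iS it1 it2.
  have is1 : i \notin s1 by apply: contra it1; apply: sub1.
  have ucs : unconfined (s1 ++ i :: s2) i.
    rewrite unconf_split //; apply/and3P; split.
    + by apply: contra it2; apply: sub2.
    + by apply: contra hB => /andP[a b]; rewrite (sub1 _ a) (sub2 _ b).
    + by apply: contra hA => /andP[a b]; rewrite (sub1 _ a) (sub2 _ b).
  subst s.
  have as' := reduced_asc rs.
  case: (rs) => vs ws _.
  have [h0 hA' hB'] := @Q1 m i i0 iN s1 s2 vs as' ucs is1.
  move=> s' rs'; have as2 := reduced_asc rs'; case: (rs') => vs' ws' _.
  have E : fin (1%g : {perm 'I_m.+1}) s' = fin (1%g : {perm 'I_m.+1}) (s1 ++ i :: s2).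
    by rewrite -(one_fin s') -(one_fin (s1 ++ i :: s2)) ws ws'.
  apply: (@Q2 m i i0 iN s' vs' as2); rewrite E; assumption.
- left => [[s' [rs' is']]].
  case: (rs) => vs ws _.
  have as2 := reduced_asc rs'; case: (rs') => vs' ws' _.
  have h1 : rk (fin (1%g : {perm 'I_m.+1}) s) i i = i.
    rewrite (rk_noletter 1%g i vs iS) rk1; clear -iN; lia.
  have [s1 [s2 [Es is1]]] := first_split is'; subst s'.
  have ws2 := ws'; rewrite one_fin fin_cat fin_cons in ws2.
  move: vs' as2; rewrite /valid_word all_cat asc_cat => /andP[v1 /andP[_ v2]] /andP[a1 /andP[aj a2]].
  have rf1 : rk (fin (1%g : {perm 'I_m.+1}) s1) i i = i.
    rewrite (rk_noletter 1%g i v1 is1) rk1; clear -iN; lia.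
  have g1i := @first_rk m i i0 iN _ rf1.
  have := rk_asc i i v2 a2.
  rewrite ws2 -ws one_fin h1 g1i => H; clear -H i0; lia.
Qed.
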